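(* Let $\Sigma$ be a finite alphabet and let $C \subseteq \Sigma^n$ be a code with $|C|\ge 2$ and minimum Levenshtein distance $d$. Let $t_\mathsf{I}$ and $t_\mathsf{D}\le n$ be non-negative integers, let $N$ be a positive integer with $n - t_\mathsf{D} \le N \le n + t_\mathsf{I}$, let $v \in \Sigma^N$, and let $\ell = |B_\mathsf{L}(v, t_\mathsf{D}, t_\mathsf{I}) \cap C|$. If $$\left(n - \frac{d}{2}\right) t_\mathsf{I} < \left(\frac{d}{2} - t_\mathsf{D}\right)(n-t_\mathsf{D})$$ (equivalently, when $d<2n$, $t_\mathsf{I} < \frac{(d/2 - t_\mathsf{D})(n-t_\mathsf{D})}{n - d/2}$), then $$\ell \leq \frac{(d/2)(n+t_\mathsf{I})}{(d/2-t_\mathsf{D})(n-t_\mathsf{D})-(n-d/2)t_\mathsf{I}}.$$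
   Context: For words $x,y$ over $\Sigma$ (possibly of different lengths), the Levenshtein distance $d_\mathsf{L}(x,y)$ is the minimum number of single-symbol insertions and deletions needed to transform $x$ into $y$. The minimum Levenshtein distance of a code $C$ is $\min\{d_\mathsf{L}(c_1,c_2): c_1\neq c_2 \in C\}$. For a word $v$ and non-negative integers $a,b$, $B_\mathsf{L}(v,a,b)$ denotes the set of all words obtainable from $v$ by at most $a$ insertions and at most $b$ deletions. *)

(* Defs.v *)
From HB Require Import structures.
From mathcomp Require Import all_boot all_order all_algebra.
Set Implicit Arguments. Unset Strict Implicit. Unset Printing Implicit Defensive.

Section Lev.
Variable S : finType.

Definition inserts (x : seq S) : seq (seq S) :=
  [seq take i x ++ s :: drop i x | i <- iota 0 (size x).+1, s <- enum S].

Definition deletes (x : seq S) : seq (seq S) :=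
  [seq take i x ++ drop i.+1 x | i <- iota 0 (size x)].

Fixpoint reach_fuel (f a b : nat) (x y : seq S) : bool :=
  (x == y) ||
  match f with
  | 0 => false
  | f'.+1 =>
      ((0 < a) && has (fun z => reach_fuel f' a.-1 b z y) (inserts x)) ||
      ((0 < b) && has (fun z => reach_fuel f' a b.-1 z y) (deletes x))
  end.

(* y is obtainable from x by at most a insertions and at most b deletions,
   i.e. y \in B_L(x, a, b). *)
Definition reach (a b : nat) (x y : seq S) : bool := reach_fuel (a + b) a b x y.

Definition lev_dist_is (x y : seq S) (k : nat) : Prop :=
  (exists a b, a + b = k /\ reach a b x y) /\
  (forall a b, reach a b x y -> k <= a + b).

Definition min_lev_dist_is (n : nat) (C : {set n.-tuple S}) (d : nat) : Prop :=
  (exists c1 c2, [/\ c1 \in C, c2 \in C, c1 != c2 & lev_dist_is c1 c2 d]) /\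
  (forall c1 c2 k, c1 \in C -> c2 \in C -> c1 != c2 -> lev_dist_is c1 c2 k -> d <= k).

End Lev.

(* Main.v *)
Require Import Defs.
From HB Require Import structures.
From mathcomp Require Import all_boot all_order all_algebra.
From mathcomp Require Import zify ring lra.
Import Order.TTheory GRing.Theory Num.Theory.
Set Implicit Arguments. Unset Strict Implicit. Unset Printing Implicit Defensive.

Section R.
Variable S : finType.
Implicit Types x y z w : seq S.

Lemma insP x z : reflect (exists i s, i <= size x /\ z = take i x ++ s :: drop i x)
  (z \in inserts x).
Proof.
apply: (iffP allpairsP) => [[[i s] [Hi _ ->]]|[i [s [Hi ->]]]].
  by exists i, s; split=> //; move: Hi; rewrite mem_iota /=; lia.
by exists (i, s); split=> //; [rewrite mem_iota /=; lia | rewrite mem_enum].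
Qed.

Lemma delP x z : reflect (exists i, i < size x /\ z = take i x ++ drop i.+1 x)
  (z \in deletes x).
Proof.
apply: (iffP mapP) => [[i Hi ->]|[i [Hi ->]]].
  by exists i; split=> //; move: Hi; rewrite mem_iota /=; lia.
by exists i => //; rewrite mem_iota; lia.
Qed.

Lemma reach_S f a b x y : reach_fuel f.+1 a b x y =
  [|| x == y, (0 < a) && has (fun z => reach_fuel f a.-1 b z y) (inserts x)
    | (0 < b) && has (fun z => reach_fuel f a b.-1 z y) (deletes x)].
Proof. by []. Qed.

Lemma reach_mono f a b x y : reach_fuel f a b x y ->
  forall f' a' b', f <= f' -> a <= a' -> b <= b' -> reach_fuel f' a' b' x y.
Proof.
elim: f a b x => [|f IH] a b x.
  by move=> /= /orP [/eqP ->|//] [|f'] a' b' _ _ _ /=; rewrite eqxx.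
move=> /= /orP [/eqP -> |/orP [/andP [Ha /hasP [z Hz Hr]]|/andP [Hb /hasP [z Hz Hr]]]]
  [|f'] a' b' Hf Ha' Hb' //=; rewrite ?eqxx //.
- apply/orP; right; apply/orP; left; apply/andP; split; first lia.
  by apply/hasP; exists z => //; apply: IH Hr _ _ _ _ _ _; lia.
- apply/orP; right; apply/orP; right; apply/andP; split; first lia.
  by apply/hasP; exists z => //; apply: IH Hr _ _ _ _ _ _; lia.
Qed.

Lemma reach_cons c f a b x y : reach_fuel f a b x y -> reach_fuel f a b (c :: x) (c :: y).
Proof.
elim: f a b x => [|f IH] a b x.
  by move=> /= /orP [/eqP ->|//]; rewrite eqxx.
rewrite !reach_S => /orP [/eqP -> |/orP [/andP [Ha /hasP [z Hz Hr]]|/andP [Hb /hasP [z Hz Hr]]]];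
  first by rewrite eqxx.
- apply/orP; right; apply/orP; left; rewrite Ha andTb.
  apply/hasP; exists (c :: z); last exact: IH.
  case/insP: Hz => i [s [Hi ->]]; apply/insP; exists i.+1, s; split=> //.
- apply/orP; right; apply/orP; right; rewrite Hb andTb.
  apply/hasP; exists (c :: z); last exact: IH.
  case/delP: Hz => i [Hi ->]; apply/delP; exists i.+1; split=> //.
Qed.

Lemma reach_delhead c k x w : reach_fuel k 0 k x w -> reach_fuel k.+1 0 k.+1 (c :: x) w.
Proof.
move=> H; rewrite reach_S; apply/orP; right; apply/orP; right; apply/andP; split=> //.
apply/hasP; exists x => //; apply/delP; exists 0; split=> //.
by rewrite take0 drop1.
Qed.

Lemma reach_inshead c f a b x y : reach_fuel f a b (c :: x) y -> reach_fuel f.+1 a.+1 b x y.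
Proof.
move=> H; rewrite reach_S; apply/orP; right; apply/orP; left; apply/andP; split=> //.
apply/hasP; exists (c :: x) => //; apply/insP; exists 0, c; split=> //.
by rewrite take0 drop0.
Qed.

Lemma del_path x w : subseq w x -> reach_fuel (size x - size w) 0 (size x - size w) x w.
Proof.
elim: x w => [|c x IH] w.
  by rewrite subseq0 => /eqP ->; rewrite /= ?eqxx.
case: w => [|e w].
  move=> _; have := IH [::] (sub0seq _); rewrite !subn0 => H.
  exact: reach_delhead.
rewrite /=; case: eqP => [-> Hs|_ Hs].
  by rewrite subSS; apply: reach_cons; apply: IH.
have Hsz := size_subseq Hs; move: (IH _ Hs) => /= H.
have -> : (size x).+1 - (size w).+1 = (size x - (size w).+1).+1 by move: Hsz => /=; lia.
exact: reach_delhead.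
Qed.

Lemma ins_path y w : subseq w y -> reach_fuel (size y - size w) (size y - size w) 0 w y.
Proof.
elim: y w => [|c y IH] w.
  by rewrite subseq0 => /eqP ->; rewrite /= ?eqxx.
case: w => [|e w].
  move=> _; have := IH [::] (sub0seq _); rewrite !subn0 => H.
  by apply: reach_inshead; apply: reach_cons.
rewrite /=; case: eqP => [-> Hs|_ Hs].
  by rewrite subSS; apply: reach_cons; apply: IH.
have Hsz := size_subseq Hs; move: (IH _ Hs) => /= H.
have -> : (size y).+1 - (size w).+1 = (size y - (size w).+1).+1 by move: Hsz => /=; lia.
by apply: reach_inshead; apply: reach_cons.
Qed.

Lemma reach_comp f1 f2 a b x w y : reach_fuel f1 0 b x w -> reach_fuel f2 a 0 w y ->
  reach_fuel (f1 + f2) a b x y.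
Proof.
elim: f1 b x => [|f1 IH] b x.
  by move=> /= /orP [/eqP ->|//] H; apply: reach_mono H _ _ _ _ _ _.
rewrite reach_S => /orP [/eqP -> |/orP [/andP [Ha _]|/andP [Hb /hasP [z Hz Hr]]]] H2 //.
  by apply: reach_mono H2 _ _ _ _ _ _; lia.
rewrite addSn reach_S; apply/orP; right; apply/orP; right; rewrite Hb andTb.
by apply/hasP; exists z => //; apply: IH.
Qed.

Lemma subseq_reach n x y w : size x = n -> size y = n -> subseq w x -> subseq w y ->
  reach (n - size w) (n - size w) x y.
Proof.
move=> Hx Hy Hwx Hwy; rewrite /reach.
have := reach_comp (del_path Hwx) (ins_path Hwy); rewrite Hx Hy.
by move/reach_mono; apply.
Qed.

End R.

Section M.
Variable S : finType.
Implicit Types x y z w : seq S.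

Lemma reach_mask f a b x y : reach_fuel f a b x y ->
  exists m : seq bool, [/\ size m = size x, subseq (mask m x) y,
     size x <= count id m + b & size y <= count id m + a].
Proof.
elim: f a b x => [|f IH] a b x.
  move=> /= /orP [/eqP ->|//]; exists (nseq (size y) true).
  rewrite size_nseq mask_true // count_nseq /=; split=> //; lia.
rewrite reach_S => /orP [/eqP -> |/orP [/andP [Ha /hasP [z Hz Hr]]|/andP [Hb /hasP [z Hz Hr]]]].
- exists (nseq (size y) true).
  rewrite size_nseq mask_true // count_nseq /=; split=> //; lia.
- case/insP: Hz Hr => i [s [Hi ->]] /IH [m' [Hsz Hsub Hx Hy]].
  have Hsz' : size m' = (size x).+1.
    by rewrite Hsz size_cat /= size_take size_drop; case: ltnP => ?; lia.
  have Hi' : i < size m' by lia.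
  exists (take i m' ++ drop i.+1 m').
  have Ht : size (take i m') = size (take i x) by rewrite !size_takel //; lia.
  have Ec : count id m' = count id (take i m') + nth false m' i + count id (drop i.+1 m').
    by rewrite -{1}(cat_take_drop i m') (drop_nth false Hi') count_cat /=; lia.
  rewrite count_cat; split.
  + by rewrite size_cat size_take size_drop; case: ltnP => ?; lia.
  + apply: subseq_trans Hsub.
    have -> : mask (take i m' ++ drop i.+1 m') x =
      mask (take i m') (take i x) ++ mask (drop i.+1 m') (drop i x)
      by rewrite -mask_cat // cat_take_drop.
    have -> : mask m' (take i x ++ s :: drop i x) = mask (take i m') (take i x) ++
      mask (nth false m' i :: drop i.+1 m') (s :: drop i x)
      by rewrite -mask_cat // -(drop_nth false Hi') cat_take_drop.
    apply: cat_subseq => //.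
    by case: (nth false m' i) => /=; [apply: subseq_cons | apply: subseq_refl].
  + move: Hx; rewrite size_cat /= size_take size_drop; case: ltnP => ?; lia.
  + lia.
- case/delP: Hz Hr => i [Hi ->] /IH [m' [Hsz Hsub Hx Hy]].
  have x0 : S. { destruct x as [|h t]; [ by [] | exact h ]. }
  have Hsz' : size m' = (size x).-1.
    by rewrite Hsz size_cat size_take size_drop Hi; lia.
  exists (take i m' ++ false :: drop i m').
  have Ht : size (take i m') = size (take i x) by rewrite !size_takel //; lia.
  rewrite count_cat /=; split.
  + by rewrite size_cat /= size_take size_drop; case: ltnP => ?; lia.
  + apply: subseq_trans Hsub.
    have -> : mask (take i m' ++ false :: drop i m') x =
      mask (take i m') (take i x) ++ mask (drop i m') (drop i.+1 x).
      have E : x = take i x ++ nth x0 x i :: drop i.+1 x by rewrite -(drop_nth x0 Hi) cat_take_drop.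
      by rewrite {1}E mask_cat.
    by rewrite -mask_cat // cat_take_drop.
  + have Ec : count id m' = count id (take i m') + count id (drop i m')
      by rewrite -{1}(cat_take_drop i m') count_cat.
    move: Hx; rewrite size_cat size_take size_drop Hi; lia.
  + have Ec : count id m' = count id (take i m') + count id (drop i m')
      by rewrite -{1}(cat_take_drop i m') count_cat.
    lia.
Qed.

Lemma mask_le x (m1 m2 : seq bool) : size m1 = size x -> size m2 = size x ->
  (forall j, nth false m1 j -> nth false m2 j) -> subseq (mask m1 x) (mask m2 x).
Proof.
elim: x m1 m2 => [|h x IH] [|b1 m1] [|b2 m2] //= [H1] [H2] Hle.
have IH' := IH m1 m2 H1 H2 (fun j => Hle j.+1).
case: b1 Hle => [|] Hle; case: b2 Hle => [|] Hle.
- by rewrite -cat1s -(cat1s h (mask m2 x)); apply: cat_subseq.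
- by have := Hle 0 isT.
- exact: subseq_trans IH' (subseq_cons _ _).
- exact: IH'.
Qed.

Lemma count_nth (m : seq bool) : count id m = \sum_(j < size m) nth false m j.
Proof.
elim: m => [|b m IH]; first by rewrite big_ord0.
by rewrite big_ord_recl /= IH.
Qed.

End M.
Section Alg.
Local Open Scope ring_scope.

Lemma cauchy_sum (N : nat) (x : 'I_N -> rat) : (0 < N)%N ->
  (\sum_j x j) ^+ 2 <= N%:R * \sum_j x j ^+ 2.
Proof.
move=> HN; set M := \sum_j x j.
have H0 : 0 <= \sum_(j < N) (N%:R * x j - M) ^+ 2 by apply: sumr_ge0 => j _; apply: sqr_ge0.
have E : \sum_(j < N) (N%:R * x j - M) ^+ 2 =
  N%:R ^+ 2 * \sum_j x j ^+ 2 - 2 * N%:R * M * M + N%:R * M ^+ 2.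
  rewrite (eq_bigr (fun j => N%:R ^+ 2 * x j ^+ 2 - (2 * N%:R * M) * x j + M ^+ 2)); last first.
    by move=> j _; ring.
  rewrite big_split /= sumrB -!mulr_sumr sumr_const card_ord.
  rewrite -/M; rewrite mulr_natl; ring.
rewrite E in H0.
have HNp : (0 : rat) < N%:R by rewrite ltr0n.
nra.
Qed.

Lemma final_alg (l M N Q2 s n L tI X D : rat) :
  M ^+ 2 <= N * Q2 -> Q2 <= M + l * (l * L - L) ->
  l * s <= M -> M <= l * n -> N * l <= M + l * tI ->
  0 <= s -> 0 <= L -> L <= n -> 0 <= tI -> 0 <= N -> N <= n + tI -> 0 <= l ->
  L * tI < (s - L) * s -> D = (s - L) * s - L * tI ->
  X = (n - L) * (n + tI) ->
  l * D <= X.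
Proof.
move=> H1 H2 H3 H4 H5 Hs00 HL HLn HtI HN HN2 Hl Hh -> ->.
have HLt : 0 <= L * tI by apply: mulr_ge0.
have Hs : 0 < s - L.
  rewrite ltNge; apply/negP => Hc.
  have : (s - L) * s <= 0 by apply: mulr_le0_ge0. lra.
have Hs0 : 0 < s by lra.
have E1 : M ^+ 2 - N * l ^+ 2 * L <= N * (M - l * L).
  have := ler_wpM2l HN H2. nra.
have E2 : M ^+ 2 - l * L * (M + l * tI) <= M ^+ 2 - N * l ^+ 2 * L.
  have := ler_wpM2l (mulr_ge0 Hl HL) H5. nra.
have E3 : l ^+ 2 * ((s - L) * s - L * tI) <= M ^+ 2 - l * L * (M + l * tI).
  have : 0 <= (M - l * s) * (M + l * s - l * L) by apply: mulr_ge0; nra.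
  nra.
have E4 : N * (M - l * L) <= l * ((n - L) * (n + tI)).
  have : 0 <= M - l * L by nra.
  nra.
have E5 : l * (l * ((s - L) * s - L * tI)) <= l * ((n - L) * (n + tI)) by nra.
have [->|lpos] := eqVneq l 0.
  rewrite mul0r; apply: mulr_ge0; lra.
have lp : 0 < l by rewrite lt_def lpos Hl.
by rewrite -(ler_pM2l lp).
Qed.

End Alg.

Lemma exists_lev (S : finType) (x y : seq S) a b : reach a b x y ->
  exists k, lev_dist_is x y k /\ (k <= a + b)%N.
Proof.
move=> H.
have mk : forall a2 b2, reach a2 b2 x y -> [exists a' : 'I_(a2 + b2).+1, reach a' (a2 + b2 - a') x y].
  move=> a2 b2 H2; apply/existsP.
  have Ha : (a2 < (a2 + b2).+1)%N by lia.
  by exists (Ordinal Ha); rewrite /= addKn.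
have Pex : exists k, [exists a' : 'I_k.+1, reach a' (k - a') x y] by exists (a + b)%N; apply: mk.
case: (ex_minnP Pex) => k /existsP [a' Ha'] Hmin.
exists k; split; last by apply: Hmin; apply: mk.
split.
  exists a', (k - a')%N; split => //; have := ltn_ord a'; lia.
by move=> a2 b2 H2; apply: Hmin; apply: mk.
Qed.

Lemma count_tnth (N : nat) (t : N.-tuple bool) : count id t = \sum_(j < N) tnth t j.
Proof.
elim: N t => [|N IH] t; first by rewrite big_ord0 tuple0.
case/tupleP: t => b t; rewrite big_ord_recl /= tnth0 IH.
by congr (_ + _); apply: eq_bigr => j _; rewrite tnthS.
Qed.
Unset Implicit Arguments.
Local Open Scope ring_scope.

Theorem mainTheorem2 (S : finType) (n : nat) (C : {set n.-tuple S}) (d tI tD N : nat)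
  (v : N.-tuple S) :
  (2 <= #|C|)%N ->
  min_lev_dist_is C d ->
  (tD <= n)%N ->
  (0 < N)%N ->
  (n - tD <= N)%N -> (N <= n + tI)%N ->
  ((n%:Q - d%:Q / 2) * tI%:Q < (d%:Q / 2 - tD%:Q) * (n%:Q - tD%:Q)) ->
  (#|[set c in C | reach tD tI v c]|)%:Q <=
    (d%:Q / 2) * (n%:Q + tI%:Q) /
    ((d%:Q / 2 - tD%:Q) * (n%:Q - tD%:Q) - (n%:Q - d%:Q / 2) * tI%:Q).
Proof.
move=> HC [[c1 [c2 [Hc1 Hc2 Hne Hd]]] Hmin] HtD HN HN1 HN2 Hhyp.
set A := [set c in C | reach tD tI v c].
have Hd2 : (d <= n + n)%N.
  case: Hd => _ Hk; apply: Hk.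
  have := subseq_reach (size_tuple c1) (size_tuple c2) (sub0seq _) (sub0seq _).
  by rewrite subn0.
pose P (c : n.-tuple S) (m : N.-tuple bool) :=
  [&& subseq (mask m v) c, (N <= count id m + tI)%N & (n <= count id m + tD)%N].
pose G c := if [pick m | P c m] is Some m then m else [tuple false | _ < N].
have HG : forall c, c \in A -> P c (G c).
  move=> c; rewrite inE => /andP [_ /reach_mask [m [Hsz Hsub Hx Hy]]].
  have Hsz' : size m == N by rewrite Hsz size_tuple.
  rewrite /G; case: pickP => [//|/(_ (Tuple Hsz'))].
  have Hx' : (N <= count id m + tI)%N by rewrite -(size_tuple v).
  have Hy' : (n <= count id m + tD)%N by rewrite -(size_tuple c).
  by rewrite /P /= Hsub Hx' Hy'.
pose F c (j : 'I_N) : bool := tnth (G c) j.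
pose mc c : nat := (\sum_(j < N) F c j)%N.
have Hmc : forall c, c \in A -> [/\ (N <= mc c + tI)%N, (n <= mc c + tD)%N & (mc c <= n)%N].
  move=> c /HG /and3P [Hs Hx Hy].
  have E : mc c = count id (G c) by rewrite count_tnth.
  rewrite E; split => //.
  have := size_subseq Hs; rewrite size_mask ?size_tuple //.
pose K c c' : nat := (\sum_(j < N) (F c j && F c' j))%N.
have HK : forall c c', c \in A -> c' \in A -> c != c' -> (2 * K c c' + d <= 2 * n)%N.
  move=> c c' Hc Hc' Hcc.
  pose am := mkseq (fun j => nth false (G c) j && nth false (G c') j) N.
  have Ham : size am = size v by rewrite size_mkseq size_tuple.
  have Hnth : forall j, nth false am j = nth false (G c) j && nth false (G c') j.
    move=> j; case: (ltnP j N) => Hj; first by rewrite nth_mkseq.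
    by rewrite !nth_default ?size_mkseq ?size_tuple.
  have HsG : forall c0, size (G c0) = size v by move=> c0; rewrite !size_tuple.
  have Hw1 : subseq (mask am v) c.
    apply: subseq_trans (mask_le Ham (HsG c) _) _.
      by move=> j; rewrite Hnth => /andP [].
    by case/and3P: (HG c Hc).
  have Hw2 : subseq (mask am v) c'.
    apply: subseq_trans (mask_le Ham (HsG c') _) _.
      by move=> j; rewrite Hnth => /andP [].
    by case/and3P: (HG c' Hc').
  have Hsw : size (mask am v) = K c c'.
    rewrite size_mask // count_nth size_mkseq /K.
    by apply: eq_bigr => j _; rewrite Hnth /F !(tnth_nth false).
  have := subseq_reach (size_tuple c) (size_tuple c') Hw1 Hw2.
  case/exists_lev => k [Hk Hk2].
  have := Hmin c c' k (setIdP Hc).1 (setIdP Hc').1 Hcc Hk.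
  have := size_subseq Hw1; rewrite size_tuple.
  rewrite Hsw in Hk2 *; lia.
have Eq : forall k : nat, k%:Q = k%:R by [].
rewrite !Eq in Hhyp *.
set l : rat := #|A|%:R.
set L : rat := n%:R - d%:R / 2.
pose x (j : 'I_N) : rat := (\sum_(c in A) (F c j : nat))%N%:R.
set M : rat := \sum_(c in A) (mc c)%:R.
have EM : \sum_j x j = M.
  rewrite /x; under eq_bigr do rewrite natr_sum.
  rewrite exchange_big; apply: eq_bigr => c _; by rewrite /mc natr_sum.
have EQ : \sum_j x j ^+ 2 = \sum_(c in A) \sum_(c' in A) (K c c')%:R.
  rewrite /x; under eq_bigr => j _ do rewrite expr2 natr_sum mulr_suml.
  rewrite (eq_bigr (fun j => \sum_(c in A) \sum_(c' in A) (F c j : nat)%:R * (F c' j : nat)%:R)); last by move=> j _; apply: eq_bigr => c _; rewrite mulr_sumr.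
  rewrite exchange_big; apply: eq_bigr => c _.
  rewrite exchange_big; apply: eq_bigr => c' _.
  by rewrite /K natr_sum; apply: eq_bigr => j _; rewrite -natrM mulnb.
have Hcs := cauchy_sum x HN; rewrite EM EQ in Hcs.
have HK' : forall c c', c \in A -> c' \in A -> c != c' -> (K c c')%:R <= L.
  move=> c c' Hc Hc' Hcc; have := HK c c' Hc Hc' Hcc.
  rewrite -(ler_nat rat) natrD natrM /L => H; lra.
have HQ2 : \sum_(c in A) \sum_(c' in A) (K c c')%:R <= M + l * (l * L - L).
  have -> : M + l * (l * L - L) = \sum_(c in A) ((mc c)%:R + (l * L - L)).
    by rewrite big_split /= sumr_const -/M -mulr_natr /l mulrC.
  apply: ler_sum => c Hc; rewrite (bigD1 c Hc) /=.
  have -> : K c c = mc c by rewrite /K /mc; apply: eq_bigr => j _; rewrite andbb.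
  rewrite lerD2l.
  have E2 : \sum_(c' in A) L = L + \sum_(c' in A | c' != c) L by rewrite (bigD1 c Hc).
  have -> : l * L - L = \sum_(c' in A | c' != c) L.
    by rewrite sumr_const in E2; rewrite /l mulrC mulr_natr E2; ring.
  apply: ler_sum => c' /andP [Hc' Hne']; apply: HK' => //; by rewrite eq_sym.
have Hs : l * (n%:R - tD%:R) <= M.
  rewrite /M /l mulrC mulr_natr -sumr_const; apply: ler_sum => c Hc.
  case: (Hmc c Hc) => _ H _; rewrite -(ler_nat rat) natrD in H; lra.
have Hn : M <= l * n%:R.
  rewrite /M /l mulrC mulr_natr -sumr_const; apply: ler_sum => c Hc.
  case: (Hmc c Hc) => _ _ H; by rewrite ler_nat.
have HNl : N%:R * l <= M + l * tI%:R.
  have -> : M + l * tI%:R = \sum_(c in A) ((mc c)%:R + tI%:R).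
    by rewrite big_split sumr_const -/M /l [_ * tI%:R]mulrC mulr_natr.
  rewrite /l mulr_natr -sumr_const; apply: ler_sum => c Hc.
  case: (Hmc c Hc) => H _ _; by rewrite -natrD ler_nat.
have Hd2' : (d%:R : rat) <= n%:R + n%:R by rewrite -natrD ler_nat.
have HtD' : (tD%:R : rat) <= n%:R by rewrite ler_nat.
have HN2' : (N%:R : rat) <= n%:R + tI%:R by rewrite -natrD ler_nat.
have HDp : 0 < (d%:R / 2 - tD%:R) * (n%:R - tD%:R) - L * tI%:R by rewrite subr_gt0.
rewrite ler_pdivlMr //.
have H0d := ler0n rat d; have H0t := ler0n rat tI; have H0N := ler0n rat N.
have H0l : 0 <= l by rewrite /l ler0n.
apply: (final_alg (s := n%:R - tD%:R) Hcs HQ2 Hs Hn HNl) => //.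
all: try (rewrite /L; lra).
all: by rewrite /L; ring.
Qed.
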